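(* Let $\mathcal I,\mathcal O\subset\{1,\dots,K\}$ be disjoint sets of local populations, and let $T>0$ and a partition function $\Theta$ be fixed. Then the degeneracy and complexity satisfy $$\mathcal D_{T,\zeta}(\mathcal I:\mathcal O)\le\mathcal C_{T,\zeta}(\mathcal I:\mathcal O).$$
   Context: Setting: a spiking neuronal network with $K$ local populations whose state evolves as a continuous-time Markov process $X_t$ with unique invariant probability distribution $\pi$; $S_{[0,T)}$ is the random spike train of the network on $[0,T)$ (the finite list of spikes $(t_l,\xi_l)$, $l=1,\dots,Z$, with spike time $t_l$ and spiking neuron $\xi_l$) when $X_0\sim\pi$, and each neuron $\xi$ belongs to a local population $k(\xi)\in\{1,\dots,K\}$. Fix a partition function $\Theta:\mathbb{Z}_{\ge0}\to\{1,\dots,d\}$. For a set $C=\{C_1,\dots,C_{|C|}\}\subset\{1,\dots,K\}$ (with a fixed ordering), define $$\zeta_C(S_{[0,T)})=\sum_{n=1}^{|C|}d^{\,n-1}\,\Theta\Big(\sum_{l=1}^Z\mathbf{1}_{\{k(\xi_l)=C_n\}}\Big),$$ an injective encoding of the vector of coarse-grained spike counts of the populations in $C$; for $C=\emptyset$, $\zeta_\emptyset$ is constant. The coarse-grained entropy is $H_{T,\zeta_C}=-\sum_i p_i\log p_i$ with $p_i=\mathbb{P}_\pi[\zeta_C(S_{[0,T)})=i]$. For disjoint $A,B$, $MI_{T,\zeta}(A:B)=H_{T,\zeta_A}+H_{T,\zeta_B}-H_{T,\zeta_{A\cup B}}$, and for pairwise disjoint $A,B,C$, $$MI_{T,\zeta}(A:B:C)=H_{T,\zeta_A}+H_{T,\zeta_B}+H_{T,\zeta_C}-H_{T,\zeta_{A\cup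 B}}-H_{T,\zeta_{B\cup C}}-H_{T,\zeta_{A\cup C}}+H_{T,\zeta_{A\cup B\cup C}}.$$ Degeneracy and complexity: with the sum over $k=0,\dots,|\mathcal I|$ and over all subsets $\mathcal I_k\subseteq\mathcal I$ of cardinality $k$, and $\mathcal I_k^c=\mathcal I\setminus\mathcal I_k$, $$\mathcal D_{T,\zeta}(\mathcal I:\mathcal O)=\sum_{k=0}^{|\mathcal I|}\frac{1}{2\binom{|\mathcal I|}{k}}\sum_{\mathcal I_k}MI_{T,\zeta}(\mathcal I_k:\mathcal I_k^c:\mathcal O),\qquad \mathcal C_{T,\zeta}(\mathcal I:\mathcal O)=\sum_{k=0}^{|\mathcal I|}\frac{1}{2\binom{|\mathcal I|}{k}}\sum_{\mathcal I_k}MI_{T,\zeta}(\mathcal I_k:\mathcal I_k^c).$$ *)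

(* Defs.v *)
From HB Require Import structures.
From mathcomp Require Import all_boot all_order all_algebra.
From mathcomp Require Import all_classical all_reals all_analysis.
Set Implicit Arguments. Unset Strict Implicit. Unset Printing Implicit Defensive.
Import Order.TTheory GRing.Theory Num.Theory.

Local Open Scope ring_scope.
Local Open Scope classical_set_scope.

Definition spike_train (R : realType) (Neuron : Type) := seq (R * Neuron).

Definition pop_count (R : realType) (Neuron : Type) (K : nat)
  (kpop : Neuron -> 'I_K) (k : 'I_K) (s : spike_train R Neuron) : nat :=
  count (fun sp => kpop sp.2 == k) s.

(* zeta_C(S) = sum_{n=1}^{|C|} d^(n-1) Theta(count of population C_n),
   where C_1,...,C_|C| is the fixed ordering [enum C] of C. *)
Definition zeta (R : realType) (Neuron : Type) (K : nat)
  (kpop : Neuron -> 'I_K) (Theta : nat -> nat) (d : nat)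
  (C : {set 'I_K}) (s : spike_train R Neuron) : nat :=
  (\sum_(p <- zip (iota 0 #|C|) (enum C)) d ^ p.1 * Theta (pop_count kpop p.2 s))%N.

Definition zeta_prob (R : realType) (dT : measure_display) (Omega : measurableType dT)
  (P : probability Omega R) (Neuron : Type) (K : nat)
  (kpop : Neuron -> 'I_K) (Theta : nat -> nat) (d : nat)
  (S : Omega -> spike_train R Neuron) (C : {set 'I_K}) (i : nat) : R :=
  fine (P [set w : Omega | zeta kpop Theta d C (S w) = i]).

(* H_{T,zeta_C} = - sum_i p_i log p_i.  zeta_C takes values < (d+1)^(|C|+1),
   so the sum over i < (d+1)^(|C|+1) is the full sum (other p_i vanish). *)
Definition cg_entropy (R : realType) (dT : measure_display) (Omega : measurableType dT)
  (P : probability Omega R) (Neuron : Type) (K : nat)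
  (kpop : Neuron -> 'I_K) (Theta : nat -> nat) (d : nat)
  (S : Omega -> spike_train R Neuron) (C : {set 'I_K}) : R :=
  - \sum_(i < (d.+1) ^ (#|C|).+1)
      (zeta_prob P kpop Theta d S C i * ln (zeta_prob P kpop Theta d S C i)).

Definition MI2 (R : realType) (dT : measure_display) (Omega : measurableType dT)
  (P : probability Omega R) (Neuron : Type) (K : nat)
  (kpop : Neuron -> 'I_K) (Theta : nat -> nat) (d : nat)
  (S : Omega -> spike_train R Neuron) (A B : {set 'I_K}) : R :=
  let H := cg_entropy P kpop Theta d S in
  H A + H B - H (A :|: B).

Definition MI3 (R : realType) (dT : measure_display) (Omega : measurableType dT)
  (P : probability Omega R) (Neuron : Type) (K : nat)
  (kpop : Neuron -> 'I_K) (Theta : nat -> nat) (d : nat)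
  (S : Omega -> spike_train R Neuron) (A B C : {set 'I_K}) : R :=
  let H := cg_entropy P kpop Theta d S in
  H A + H B + H C - H (A :|: B) - H (B :|: C) - H (A :|: C) + H (A :|: B :|: C).

Definition degeneracy (R : realType) (dT : measure_display) (Omega : measurableType dT)
  (P : probability Omega R) (Neuron : Type) (K : nat)
  (kpop : Neuron -> 'I_K) (Theta : nat -> nat) (d : nat)
  (S : Omega -> spike_train R Neuron) (I O : {set 'I_K}) : R :=
  \sum_(k < #|I|.+1) ((2 * 'C(#|I|, k))%:R)^-1 *
     \sum_(Ik in powerset I | #|Ik| == k)
        MI3 P kpop Theta d S Ik (I :\: Ik) O.

Definition complexity (R : realType) (dT : measure_display) (Omega : measurableType dT)
  (P : probability Omega R) (Neuron : Type) (K : nat)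
  (kpop : Neuron -> 'I_K) (Theta : nat -> nat) (d : nat)
  (S : Omega -> spike_train R Neuron) (I O : {set 'I_K}) : R :=
  \sum_(k < #|I|.+1) ((2 * 'C(#|I|, k))%:R)^-1 *
     \sum_(Ik in powerset I | #|Ik| == k)
        MI2 P kpop Theta d S Ik (I :\: Ik).

(* Main.v *)
Require Import Defs.
From HB Require Import structures.
From mathcomp Require Import all_boot all_order all_algebra.
From mathcomp Require Import all_classical all_reals all_analysis.
From mathcomp Require Import ring lra zify.
Import Order.TTheory GRing.Theory Num.Theory.
Local Open Scope ring_scope.
Section Abs.
Variables (R : realType) (T : finType) (q : T -> R).
Hypothesis q0 : forall t, 0 <= q t.
Definition pF (f : T -> nat) (t : T) : R := \sum_(t' | f t' == f t) q t'.

Lemma pF_ge f t : q t <= pF f t.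
Proof.
rewrite /pF (bigD1 t) //= lerDl; apply: sumr_ge0 => *; exact: q0.
Qed.

Lemma pF_ge0 f t : 0 <= pF f t.
Proof. exact: le_trans (q0 t) (pF_ge f t). Qed.

Lemma pF_eq {f t t'} : f t = f t' -> pF f t = pF f t'.
Proof. by move=> e; rewrite /pF e. Qed.

Lemma ln_le_subr1 (x : R) : 0 < x -> ln x <= x - 1.
Proof.
move=> x0; have := expR_ge1Dx (ln x); rewrite lnK ?posrE //; lra.
Qed.

Variables fX fY fZ fW : T -> nat.
Hypothesis hXZ : forall t t', fX t = fX t' -> fZ t = fZ t'.
Hypothesis hYZ : forall t t', fY t = fY t' -> fZ t = fZ t'.
Hypothesis hW : forall t t', (fW t == fW t') = (fX t == fX t') && (fY t == fY t').

Let ratio t := pF fX t * pF fY t / (pF fZ t * pF fW t).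

Lemma step1 t : q t * (ln (pF fX t) + ln (pF fY t) - ln (pF fZ t) - ln (pF fW t))
   <= q t * ratio t - q t.
Proof.
have [->|qt] := eqVneq (q t) 0; first by rewrite !mul0r subrr.
have qp : 0 < q t by rewrite lt_def qt q0.
have gp f : 0 < pF f t by exact: lt_le_trans qp (pF_ge f t).
have := gp fX; have := gp fY; have := gp fZ; have := gp fW.
move=> pW pZ pY pX.
have -> : ln (pF fX t) + ln (pF fY t) - ln (pF fZ t) - ln (pF fW t) = ln (ratio t).
  rewrite /ratio ln_div ?posrE ?mulr_gt0 // !lnM ?posrE //. ring.
rewrite -[X in _ <= _ - X]mulr1 -mulrBr ler_wpM2l ?q0 //.
apply: ln_le_subr1; rewrite /ratio divr_gt0 ?mulr_gt0 //.
Qed.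

Lemma inner a b : \sum_t (if (fX a == fX t) && (fY b == fY t) then q t / pF fW t else 0)
   <= (fZ a == fZ b)%:R.
Proof.
case: (pickP (fun t => (fX a == fX t) && (fY b == fY t))) => [t0 /andP[/eqP e1 /eqP e2]|none]; last first.
  rewrite big1 ?ler0n // => t _; by rewrite none.
have -> : fZ a == fZ b by rewrite (hXZ _ _ e1) (hYZ _ _ e2) eqxx.
rewrite -big_mkcond /=.
rewrite (eq_bigl (fun t => fW t == fW t0)); last first.
  by move=> t; rewrite hW e1 e2 ![_ == fX t]eq_sym ![_ == fY t]eq_sym.
rewrite (eq_bigr (fun t => q t / pF fW t0)); last by move=> t /eqP e; rewrite (pF_eq e).
rewrite -mulr_suml -/(pF fW t0).
have [->|nz] := eqVneq (pF fW t0) 0; first by rewrite mul0r ler01.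
by rewrite divff.
Qed.

Lemma step2 : \sum_t q t * ratio t <= \sum_t q t.
Proof.
have E : forall t, q t * ratio t = \sum_a \sum_b
   (if (fX a == fX t) && (fY b == fY t) then q a * q b / pF fZ a * (q t / pF fW t) else 0).
  move=> t; have -> : q t * ratio t = (pF fX t * pF fY t) * (q t / (pF fZ t * pF fW t)).
    by rewrite /ratio; ring.
  rewrite [pF fX t]/pF [pF fY t]/pF (big_mkcond (fun a => fX a == fX t)) (big_mkcond (fun a => fY a == fY t)) /=.
  rewrite mulr_suml mulr_suml; apply: eq_bigr => a _.
  rewrite mulr_sumr mulr_suml; apply: eq_bigr => b _.
  case: eqP => ea; case: eqP => eb /=; try by rewrite !(mul0r, mulr0).
  rewrite -/(pF fZ a) (pF_eq (hXZ _ _ ea)) -/(pF fZ t) invfM; ring.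
rewrite (eq_bigr _ (fun t _ => E t)) exchange_big /=.
apply: ler_sum => a _; rewrite exchange_big /=.
apply: le_trans (_ : \sum_b q a * q b / pF fZ a * (fZ a == fZ b)%:R <= _).
  apply: ler_sum => b _.
  rewrite (eq_bigr (fun t => q a * q b / pF fZ a * (if (fX a == fX t) && (fY b == fY t) then q t / pF fW t else 0))); last first.
    by move=> t _; case: ifP; rewrite ?mulr0.
  rewrite -mulr_sumr ler_wpM2l ?inner //.
  by rewrite divr_ge0 ?mulr_ge0 ?q0 ?pF_ge0.
rewrite (eq_bigr (fun b => q a / pF fZ a * (if fZ b == fZ a then q b else 0))); last first.
  move=> b _; rewrite eq_sym; case: eqP => _; rewrite ?mulr1 ?mulr0 //; ring.
rewrite -mulr_sumr -big_mkcond /= -/(pF fZ a).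
have [->|nz] := eqVneq (pF fZ a) 0; first by rewrite mulr0 q0.
by rewrite divfK.
Qed.

Lemma submod : \sum_t q t * ln (pF fX t) + \sum_t q t * ln (pF fY t)
   <= \sum_t q t * ln (pF fZ t) + \sum_t q t * ln (pF fW t).
Proof.
rewrite -subr_ge0.
have : \sum_t q t * (ln (pF fX t) + ln (pF fY t) - ln (pF fZ t) - ln (pF fW t)) <= 0.
  apply: le_trans (ler_sum _ (fun t _ => step1 t)) _.
  by rewrite sumrB subr_le0 step2.
rewrite (eq_bigr (fun t => q t * ln (pF fX t) + q t * ln (pF fY t) - q t * ln (pF fZ t) - q t * ln (pF fW t))); last by move=> t _; ring.
rewrite !sumrB big_split /=; lra.
Qed.
End Abs.
Set Implicit Arguments. Unset Strict Implicit.

Section Enc.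
Variables (X : eqType) (d : nat) (t : X -> nat).
Definition Ej (j : nat) (s : seq X) : nat :=
  (\sum_(p <- zip (iota j (size s)) s) d ^ p.1 * (t p.2).+1)%N.

Lemma Ej_shift s j : Ej j.+1 s = (d * Ej j s)%N.
Proof.
elim: s j => [|x s IH] j; first by rewrite /Ej /= !big_nil muln0.
rewrite /Ej /= !big_cons /= -/(Ej j.+2 s) -/(Ej j.+1 s) IH expnS.
by rewrite mulnDr mulnA.
Qed.

Lemma Ej_cons x s : Ej 0 (x :: s) = ((t x).+1 + d * Ej 0 s)%N.
Proof.
by rewrite {1}/Ej /= big_cons /= -/(Ej 1 s) Ej_shift expn0 mul1n.
Qed.

Lemma Ej_lt s : (forall x, t x < d)%N -> (Ej 0 s < d.+1 ^ size s)%N.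
Proof.
move=> ht; elim: s => [|x s IH]; first by rewrite /Ej big_nil.
rewrite Ej_cons /= expnS.
have := leq_mul (leqnn d.+1) IH. have := ht x. lia.
Qed.
End Enc.

Lemma Ej_inj (X : eqType) d (t t' : X -> nat) s :
  (forall x, t x < d)%N -> (forall x, t' x < d)%N ->
  Ej d t 0 s = Ej d t' 0 s <-> {in s, t =1 t'}.
Proof.
move=> ht ht'; split.
  elim: s => [|x s IH]; first by [].
  rewrite !Ej_cons => E.
  have ex : Ej d t 0 s = Ej d t' 0 s.
    have := ht x; have := ht' x.
    case: (ltngtP (Ej d t 0 s) (Ej d t' 0 s)) => // h.
      have := leq_mul (leqnn d) h; rewrite mulnS; lia.
    have := leq_mul (leqnn d) h; rewrite mulnS; lia.
  move=> y; rewrite inE => /orP[/eqP ->|ys]; last exact: IH.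
  by move/eqP: E; rewrite ex eqn_add2r eqSS => /eqP.
elim: s => [|x s IH] h; first by rewrite /Ej !big_nil.
rewrite !Ej_cons h ?mem_head // IH // => y ys; apply: h; by rewrite inE ys orbT.
Qed.

Section Main.
Variables (R : realType) (dT : measure_display) (Omega : measurableType dT)
  (P : probability Omega R) (Neuron : Type) (K : nat)
  (kpop : Neuron -> 'I_K) (d : nat) (Theta : nat -> nat)
  (S : Omega -> spike_train R Neuron).
Hypothesis hTh : forall n, (1 <= Theta n <= d)%N.
Hypothesis hmeas : forall (k : 'I_K) (n : nat),
     measurable [set w : Omega | pop_count kpop k (S w) = n]%classic.

Local Open Scope classical_set_scope.

Let pc k w := pop_count kpop k (S w).
Lemma hT n : ((Theta n).-1 < d)%N.
Proof. by have := hTh n; lia. Qed.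

Definition Tt := {ffun 'I_K -> 'I_d}.
Definition tau w : Tt := [ffun k => Ordinal (hT (pc k w))].
Definition qq (t : Tt) : R := fine (P [set w | tau w = t]).
Definition FC (C : {set 'I_K}) (t : Tt) : nat :=
  Ej d (fun k => nat_of_ord (t k)) 0 (enum C).

Lemma zetaE C w : zeta kpop Theta d C (S w) = FC C (tau w).
Proof.
rewrite /zeta /FC /Ej -cardE; apply: eq_bigr => p _; rewrite ffunE /= prednK //.
by case/andP: (hTh (pop_count kpop p.2 (S w))).
Qed.

Lemma FC_eq C t t' : FC C t = FC C t' <-> {in C, forall k, t k = t' k}.
Proof.
rewrite /FC Ej_inj; last by move=> x; exact: ltn_ord.
  split => h k; rewrite ?mem_enum => kC.
    by apply: val_inj; apply: h; rewrite mem_enum.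
  by rewrite h.
by move=> x; exact: ltn_ord.
Qed.

Lemma mtauk k (j : 'I_d) : measurable [set w | tau w k = j].
Proof.
have -> : [set w | tau w k = j] =
   \bigcup_n (if (Theta n).-1 == j then [set w | pc k w = n] else set0).
  apply/seteqP; split => w /=.
    rewrite ffunE => <-; exists (pc k w) => //=; by rewrite eqxx.
  move=> [n _]; case: eqP => // e pcn; rewrite ffunE; apply: val_inj => /=.
  by rewrite pcn e.
apply: bigcupT_measurable => n; case: eqP => _; [exact: hmeas | exact: measurable0].
Qed.

Lemma mtau t : measurable [set w | tau w = t].
Proof.
have H : forall s : seq 'I_K, measurable [set w | forall k, k \in s -> tau w k = t k].
  elim => [|x s IH].
    have -> : [set w | forall k, k \in [::] -> tau w k = t k] = setT.
      by apply/seteqP; split => w //=.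
    exact: measurableT.
  have -> : [set w | forall k, k \in x :: s -> tau w k = t k] =
     [set w | tau w x = t x] `&` [set w | forall k, k \in s -> tau w k = t k].
    apply/seteqP; split => w /=.
      move=> h; split; first by apply: h; exact: mem_head.
      by move=> k ks; apply: h; rewrite inE ks orbT.
    by move=> [h1 h2] k; rewrite inE => /orP[/eqP->//|]; exact: h2.
  apply: measurableI => //; exact: mtauk.
have -> : [set w | tau w = t] = [set w | forall k, k \in enum 'I_K -> tau w k = t k].
  apply/seteqP; split => w /=; first by move=> -> k.
  by move=> h; apply/ffunP => k; apply: h; rewrite mem_enum.
exact: H.
Qed.

Lemma Pfin A : measurable A -> P A = (fine (P A))%:E.
Proof.
move=> mA; rewrite fineK // ge0_fin_numE //.
exact: le_lt_trans (probability_le1 P mA) (ltry _).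
Qed.

Lemma mtau_s (s : seq Tt) : measurable [set w | tau w \in s].
Proof.
elim: s => [|x s IH].
  have -> : [set w | tau w \in ([::] : seq Tt)] = set0 by apply/seteqP; split => w //=.
  exact: measurable0.
have -> : [set w | tau w \in x :: s] = [set w | tau w = x] `|` [set w | tau w \in s].
  apply/seteqP; split => w /=; rewrite inE.
    by move=> /orP[/eqP->|h]; [left|right].
  by case=> [->|->]; rewrite ?eqxx ?orbT.
apply: measurableU => //; exact: mtau.
Qed.

Lemma Psum (s : seq Tt) : uniq s -> P [set w | tau w \in s] = (\sum_(t <- s) qq t)%:E.
Proof.
elim: s => [|x s IH] /=.
  have -> : [set w | tau w \in ([::] : seq Tt)] = set0 by apply/seteqP; split => w //=.
  by rewrite big_nil measure0.
move=> /andP[xs us]; rewrite big_cons EFinD -IH //.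
have -> : [set w | tau w \in x :: s] = [set w | tau w = x] `|` [set w | tau w \in s].
  apply/seteqP; split => w /=; rewrite inE.
    by move=> /orP[/eqP->|h]; [left|right].
  by case=> [->|->]; rewrite ?eqxx ?orbT.
rewrite measureU //; first by rewrite /qq -Pfin //; exact: mtau.
- exact: mtau.
- exact: mtau_s.
apply/seteqP; split => w //= [e]; by rewrite e (negbTE xs).
Qed.

Lemma qq0 t : 0 <= qq t.
Proof. by apply: fine_ge0; exact: measure_ge0. Qed.

Lemma zprobE C i : zeta_prob P kpop Theta d S C i = \sum_(t | FC C t == i) qq t.
Proof.
rewrite /zeta_prob.
have -> : [set w | zeta kpop Theta d C (S w) = i] =
     [set w | tau w \in [seq t <- enum Tt | FC C t == i]].
  apply/seteqP; split => w /=; rewrite mem_filter mem_enum andbT zetaE.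
    by move=> ->.
  by move/eqP.
rewrite Psum; last by rewrite filter_uniq // enum_uniq.
rewrite big_filter big_enum_cond //=.
Qed.

Lemma FC_lt C t : (FC C t < d.+1 ^ #|C|.+1)%N.
Proof.
have := @Ej_lt _ d (fun k => nat_of_ord (t k)) (enum C) (fun x => ltn_ord _).
rewrite -cardE => h; apply: leq_trans h _; apply: leq_pexp2l => //.
Qed.

Lemma entE C : cg_entropy P kpop Theta d S C = - \sum_t qq t * ln (@pF _ _ qq (FC C) t).
Proof.
rewrite /cg_entropy; congr (- _).
under eq_bigr do rewrite zprobE.
transitivity (\sum_(i < d.+1 ^ #|C|.+1) \sum_t
   (if FC C t == i then qq t * ln (@pF _ _ qq (FC C) t) else 0)).
  apply: eq_bigr => i _; rewrite mulr_suml big_mkcond; apply: eq_bigr => t _.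
  by case: eqP => // e; rewrite /pF e.
rewrite exchange_big; apply: eq_bigr => t _; rewrite -big_mkcond /=.
rewrite (big_pred1 (Ordinal (FC_lt C t))) // => i /=.
by rewrite -val_eqE /= eq_sym.
Qed.

Lemma mi A B C : MI3 P kpop Theta d S A B C <= MI2 P kpop Theta d S A B.
Proof.
rewrite /MI3 /MI2 /= !entE.
have hXZ : forall t t', FC (A :|: C) t = FC (A :|: C) t' -> FC C t = FC C t'.
  move=> t t' /FC_eq h; apply/FC_eq => k kC; apply: h; by rewrite inE kC orbT.
have hYZ : forall t t', FC (B :|: C) t = FC (B :|: C) t' -> FC C t = FC C t'.
  move=> t t' /FC_eq h; apply/FC_eq => k kC; apply: h; by rewrite inE kC orbT.
have hW : forall t t', (FC (A :|: B :|: C) t == FC (A :|: B :|: C) t') =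
    (FC (A :|: C) t == FC (A :|: C) t') && (FC (B :|: C) t == FC (B :|: C) t').
  move=> t t'; apply/idP/idP.
    move/eqP/FC_eq => h; apply/andP; split; apply/eqP/FC_eq => k; rewrite !inE => H;
      apply: h; rewrite !inE; move: H;
      by case: (k \in A); case: (k \in B); case: (k \in C).
  move=> /andP[/eqP/FC_eq h1 /eqP/FC_eq h2]; apply/eqP/FC_eq => k.
  rewrite !inE => /orP[/orP[kA|kB]|kC]; [apply: h1|apply: h2|apply: h1];
    by rewrite !inE ?kA ?kB ?kC ?orbT.
have := @submod _ _ _ qq0 _ _ _ _ hXZ hYZ hW.
lra.
Qed.
End Main.

Theorem theorem5p3 (R : realType) (dT : measure_display) (Omega : measurableType dT)
  (P : probability Omega R) (Neuron : Type) (K : nat)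
  (kpop : Neuron -> 'I_K) (d : nat) (Theta : nat -> nat)
  (T : R) (S : Omega -> spike_train R Neuron) (I O : {set 'I_K}) :
  (0 < d)%N ->
  (forall n, (1 <= Theta n <= d)%N) ->
  0 < T ->
  (forall w, all (fun sp => (0 <= sp.1) && (sp.1 < T)) (S w)) ->
  (forall (k : 'I_K) (n : nat),
     measurable [set w : Omega | pop_count kpop k (S w) = n]%classic) ->
  [disjoint I & O] ->
  degeneracy P kpop Theta d S I O <= complexity P kpop Theta d S I O.
Proof.
move=> _ hTh _ _ hmeas _.
rewrite /degeneracy /complexity; apply: ler_sum => k _.
apply: ler_wpM2l; first by rewrite invr_ge0 ler0n.
apply: ler_sum => Ik _; exact: mi.
Qed.
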